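(* Fix $R>0$. For $\theta_0\in[0,2\pi)$, $\varphi_0\in[0,2\pi)$ and $\tau\geq 0$ define $$\mathbf r_0(\theta_0,\varphi_0)=(-R\cos\theta_0\cos\varphi_0,\;R\cos\theta_0\sin\varphi_0,\;R\sin\theta_0),\qquad \mathbf p_0(\theta_0,\varphi_0)=(\sin\theta_0\cos\varphi_0,\;-\sin\theta_0\sin\varphi_0,\;\cos\theta_0),$$ and the ray map $F(\theta_0,\varphi_0,\tau)=\mathbf r_0(\theta_0,\varphi_0)+\tau\,\mathbf p_0(\theta_0,\varphi_0)\in\mathbb R^3$. Then the caustic of this family of rays, i.e. the set $$\{F(\theta_0,\varphi_0,\tau)\;:\;\det DF(\theta_0,\varphi_0,\tau)=0\}$$ (where $DF$ is the Jacobian matrix of $(x,y,z)=F$ with respect to $(\theta_0,\varphi_0,\tau)$), is the union of (a) the sphere $\{\mathbf x\in\mathbb R^3:|\mathbf x|=R\}$ (the surface of the ball, envelope of the diffracted rays) and (b) the two semiaxes $\mathcal A_+=\{(0,0,z):z\geq R\}$ and $\mathcal A_-=\{(0,0,z):z\leq -R\}$ (the axial caustic).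
   Context: Physical setting: a spherical obstacle (ball of radius $R$ centred at the origin of Cartesian coordinates $(x,y,z)$) is illuminated by a beam of rays parallel to the $z$-axis coming from $z=-\infty$; rays grazing the sphere travel along meridians and leave it tangentially. The point $\mathbf r_0$ is the point on the sphere where the ray leaves the surface ($\theta_0$ is the angle measured along the meridian from the point of incidence, $\varphi_0$ the azimuthal angle), $\mathbf p_0$ is the unit tangent vector there, and $\tau\ge 0$ is the arclength parameter along the emerging straight ray. The extended symmetry axis of the ball is the $z$-axis, $\mathcal A_-$ is its part on the illuminated side and $\mathcal A_+$ its part in the shadow. *)

(* Defs.v *)
From Stdlib Require Import Reals.
From Coquelicot Require Import Coquelicot.
Open Scope R_scope.

Definition pt3 := (R * R * R)%type.
Definition px (p : pt3) : R := fst (fst p).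
Definition py (p : pt3) : R := snd (fst p).
Definition pz (p : pt3) : R := snd p.

Definition r0 (Rr th ph : R) : pt3 :=
  (- Rr * cos th * cos ph, Rr * cos th * sin ph, Rr * sin th).
Definition p0 (th ph : R) : pt3 :=
  (sin th * cos ph, - sin th * sin ph, cos th).

Definition rayF (Rr th ph tau : R) : pt3 :=
  (px (r0 Rr th ph) + tau * px (p0 th ph),
   py (r0 Rr th ph) + tau * py (p0 th ph),
   pz (r0 Rr th ph) + tau * pz (p0 th ph)).

Definition det3 (a11 a12 a13 a21 a22 a23 a31 a32 a33 : R) : R :=
  a11 * (a22 * a33 - a23 * a32)
  - a12 * (a21 * a33 - a23 * a31)
  + a13 * (a21 * a32 - a22 * a31).

Definition jacF (Rr th ph tau : R) : R :=
  let c (k : pt3 -> R) (i : nat) : R :=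
    match i with
    | 0%nat => Derive (fun t => k (rayF Rr t ph tau)) th
    | 1%nat => Derive (fun t => k (rayF Rr th t tau)) ph
    | _ => Derive (fun t => k (rayF Rr th ph t)) tau
    end in
  det3 (c px 0%nat) (c px 1%nat) (c px 2%nat)
       (c py 0%nat) (c py 1%nat) (c py 2%nat)
       (c pz 0%nat) (c pz 1%nat) (c pz 2%nat).

Definition caustic (Rr : R) (p : pt3) : Prop :=
  exists th ph tau,
    0 <= th < 2 * PI /\ 0 <= ph < 2 * PI /\ 0 <= tau /\
    jacF Rr th ph tau = 0 /\ rayF Rr th ph tau = p.

Definition on_sphere (Rr : R) (p : pt3) : Prop :=
  sqrt (px p ^ 2 + py p ^ 2 + pz p ^ 2) = Rr.
Definition axis_plus (Rr : R) (p : pt3) : Prop :=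
  px p = 0 /\ py p = 0 /\ Rr <= pz p.
Definition axis_minus (Rr : R) (p : pt3) : Prop :=
  px p = 0 /\ py p = 0 /\ pz p <= - Rr.

(* Main.v *)
Require Import Defs.
From Stdlib Require Import Reals Lra.
From Coquelicot Require Import Coquelicot.
Open Scope R_scope.

Lemma jac_eq Rr th ph tau :
  jacF Rr th ph tau = - (tau * sin th - Rr * cos th) * tau.
Proof.
unfold jacF, rayF, r0, p0, px, py, pz; cbn -[Derive].
repeat match goal with |- context [Derive ?f ?x] =>
  let H := fresh in
  assert (H : is_derive f x (Derive f x)) by (apply Derive_correct; auto_derive; auto);
  erewrite (is_derive_unique f x _ ltac:(auto_derive; auto)) in *; clear H end.
unfold det3.
assert (E := sin2_cos2 th). assert (F := sin2_cos2 ph). unfold Rsqr in *.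
assert (F2 : cos ph ^ 2 = 1 - sin ph ^ 2) by nra. assert (E2 : cos th ^ 2 = 1 - sin th ^ 2) by nra. ring_simplify. rewrite ?F2. ring_simplify. rewrite ?E2. replace (cos th ^ 3) with (cos th * cos th ^ 2) by ring. rewrite E2. ring.
Qed.

Lemma angle_exists a b : a * a + b * b = 1 ->
  exists t, 0 <= t < 2 * PI /\ cos t = a /\ sin t = b.
Proof.
intros H.
assert (Ha : -1 <= a <= 1) by nra.
assert (HP := PI_RGT_0).
destruct (Rle_or_lt 0 b) as [Hb|Hb].
- exists (acos a). pose proof (acos_bound a). split; [lra|].
  split; [apply cos_acos; lra|].
  rewrite sin_acos by lra. replace (1 - a²) with (b²) by (unfold Rsqr; lra).
  apply sqrt_Rsqr; lra.
- assert (Ha' : -1 < a < 1) by nra.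
  pose proof (acos_bound_lt a Ha').
  exists (2 * PI - acos a). split; [lra|].
  rewrite cos_minus, sin_minus, cos_2PI, sin_2PI, cos_acos, sin_acos by lra.
  split; [ring|].
  replace (1 - a²) with ((- b)²) by (unfold Rsqr; lra).
  rewrite sqrt_Rsqr by lra. ring.
Qed.

Lemma trig1 t : cos t * cos t + sin t * sin t = 1.
Proof. pose proof (sin2_cos2 t). unfold Rsqr in *. lra. Qed.

Lemma axis_pt Rr a b : 0 < Rr -> a * a + b * b = 1 -> b <> 0 -> 0 <= a / b ->
  caustic Rr (0, 0, Rr / b).
Proof.
intros HR H Hb Hab.
destruct (angle_exists a b H) as [t [Ht [Hc Hs]]].
exists t, 0, (Rr * (a / b)).
assert (HP := PI_RGT_0).
split; [exact Ht|]. split; [lra|]. split.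
{ apply Rmult_le_pos; lra. }
split.
- rewrite jac_eq, Hc, Hs. field. exact Hb.
- unfold rayF, r0, p0, px, py, pz; cbn. rewrite Hc, Hs, cos_0, sin_0.
  f_equal; [f_equal|]; try (field; auto).
  replace (Rr * b) with (Rr * b * b / b) by (field; auto).
  replace (Rr * b * b) with (Rr * (1 - a * a)) by nra. field; auto.
Qed.

Lemma sphere_pt Rr x y z : 0 < Rr -> x * x + y * y + z * z = Rr * Rr ->
  caustic Rr (x, y, z).
Proof.
intros HR H.
assert (HP := PI_RGT_0).
set (r := sqrt (x * x + y * y)).
assert (Hr2 : r * r = x * x + y * y) by (apply sqrt_sqrt; nra).
assert (Hr0 : 0 <= r) by apply sqrt_pos.
destruct (angle_exists (- r / Rr) (z / Rr)) as [t [Ht [Hc Hs]]].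
{ field_simplify; [|lra]. replace (r ^ 2 + z ^ 2) with (Rr ^ 2) by nra. field. lra. }
destruct (Req_dec r 0) as [Hr|Hr].
- exists t, 0, 0. split; [exact Ht|]. split; [lra|]. split; [lra|].
  split; [rewrite jac_eq; ring|].
  assert (x = 0) by nra. assert (y = 0) by nra. subst x y.
  unfold rayF, r0, p0, px, py, pz; cbn. rewrite Hc, Hs, Hr.
  f_equal; [f_equal|]; field; lra.
- destruct (angle_exists (x / r) (- y / r)) as [u [Hu [Hcu Hsu]]].
  { replace (x / r * (x / r) + - y / r * (- y / r)) with ((x * x + y * y) / (r * r)) by (field; auto).
    rewrite <- Hr2. field. auto. }
  exists t, u, 0. split; [exact Ht|]. split; [exact Hu|]. split; [lra|].
  split; [rewrite jac_eq; ring|].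
  unfold rayF, r0, p0, px, py, pz; cbn. rewrite Hc, Hs, Hcu, Hsu.
  f_equal; [f_equal|]. all: field; repeat split; first [assumption | lra].
Qed.

Theorem proposition6 (Rr : R) (HR : 0 < Rr) (p : pt3) :
  caustic Rr p <-> (on_sphere Rr p \/ axis_plus Rr p \/ axis_minus Rr p).
Proof.
split.
- intros [th [ph [tau [Hth [Hph [Htau [J Ep]]]]]]].
  rewrite jac_eq in J. subst p.
  pose proof (trig1 th) as E. pose proof (trig1 ph) as F.
  unfold on_sphere, axis_plus, axis_minus, rayF, r0, p0, px, py, pz; cbn.
  assert (K : tau = 0 \/ tau * sin th - Rr * cos th = 0).
  { destruct (Req_dec tau 0); [now left|right].
    apply (Rmult_eq_reg_r tau); [|auto]. lra. }
  destruct K as [K|K].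
  + left. subst tau.
    match goal with |- sqrt ?e = _ => replace e with (Rr * Rr) end.
    * apply sqrt_square; lra.
    * replace (Rr * Rr) with (Rr * Rr * (cos th * cos th * (cos ph * cos ph + sin ph * sin ph) + sin th * sin th)) by (rewrite F, Rmult_1_r, E; ring).
      ring.
  + right.
    assert (Hx : - Rr * cos th * cos ph + tau * (sin th * cos ph) = 0).
    { replace (- Rr * cos th * cos ph + tau * (sin th * cos ph)) with
        ((tau * sin th - Rr * cos th) * cos ph) by ring. rewrite K; ring. }
    assert (Hy : Rr * cos th * sin ph + tau * (- sin th * sin ph) = 0).
    { replace (Rr * cos th * sin ph + tau * (- sin th * sin ph)) with
        (- (tau * sin th - Rr * cos th) * sin ph) by ring. rewrite K; ring. }
    rewrite Hx, Hy.
    set (z := Rr * sin th + tau * cos th).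
    assert (Hz : z * sin th = Rr).
    { unfold z. assert (K' : tau * sin th = Rr * cos th) by lra.
      replace ((Rr * sin th + tau * cos th) * sin th) with
        (Rr * (sin th * sin th) + cos th * (tau * sin th)) by ring.
      rewrite K'. replace Rr with (Rr * (cos th * cos th + sin th * sin th)) at 3 by (rewrite E; ring).
      ring. }
    destruct (Rle_or_lt 0 (sin th)) as [S|S].
    * left. split; [reflexivity|]. split; [reflexivity|].
      destruct S as [S|S]; [|rewrite <- S in Hz; lra].
      assert (sin th <= 1) by nra. nra.
    * right. split; [reflexivity|]. split; [reflexivity|].
      assert (-1 <= sin th) by nra. nra.
- destruct p as [[x y] z].
  unfold on_sphere, axis_plus, axis_minus, px, py, pz; cbn.
  intros [H|[[Hx [Hy Hz]]|[Hx [Hy Hz]]]].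
  + apply sphere_pt; [exact HR|].
    assert (H2 := H). rewrite <- H in HR.
    apply (f_equal (fun v => v * v)) in H2. rewrite sqrt_sqrt in H2.
    * lra.
    * nra.
  + subst x y.
    set (b := Rr / z).
    assert (Hb : 0 < b <= 1).
    { unfold b. split; [apply Rdiv_lt_0_compat; lra|].
      apply (Rmult_le_reg_r z); [lra|]. field_simplify; lra. }
    set (a := sqrt (1 - b * b)).
    assert (Ha2 : a * a = 1 - b * b) by (apply sqrt_sqrt; nra).
    replace z with (Rr / b) by (unfold b; field; lra).
    apply (axis_pt Rr a b); [exact HR|lra|lra|].
    apply Rdiv_le_0_compat; [apply sqrt_pos|lra].
  + subst x y.
    set (b := Rr / z).
    assert (Hb : -1 <= b < 0).
    { unfold b. split.
      - apply (Rmult_le_reg_r (- z)); [lra|].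
        replace (Rr / z * - z) with (- Rr) by (field; lra). lra.
      - apply Ropp_lt_cancel. replace (- (Rr / z)) with (Rr / - z) by (field; lra).
        rewrite Ropp_0; apply Rdiv_lt_0_compat; lra. }
    set (a := - sqrt (1 - b * b)).
    assert (Ha2 : a * a = 1 - b * b).
    { unfold a. replace (- sqrt (1 - b * b) * - sqrt (1 - b * b)) with
        (sqrt (1 - b * b) * sqrt (1 - b * b)) by ring. apply sqrt_sqrt; nra. }
    replace z with (Rr / b) by (unfold b; field; lra).
    apply (axis_pt Rr a b); [exact HR|lra|lra|].
    unfold a. pose proof (sqrt_pos (1 - b * b)).
    replace (- sqrt (1 - b * b) / b) with (sqrt (1 - b * b) / - b) by (field; lra).
    apply Rdiv_le_0_compat; lra.
Qed.
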